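(* Let $\sigma$ be a super filling of $\mathrm{dg}(\lambda)$ (order $<_2$) that is not $\Phi$-trivial, with distinguished label $a$, and let $r$ be the row of its distinguished cell. Let $u$ be any cell in row $r$ with $|\sigma(u)|=a$. Then $\mathrm{maj}(\Phi_u(\sigma))=\mathrm{maj}(\sigma)+1$ if $\sigma(u)=a$, and $\mathrm{maj}(\Phi_u(\sigma))=\mathrm{maj}(\sigma)-1$ if $\sigma(u)=\bar a$.
   Context: Let $\lambda=(\lambda_1\ge\dots\ge\lambda_k>0)$ be a partition; $\mathrm{dg}(\lambda)=\{(r,i):1\le i\le k,1\le r\le\lambda_i\}$, $(r,i)$ being row $r$ from the bottom and column $i$ from the left (columns bottom-justified of heights $\lambda_i$); $\mathrm{leg}((r,i))=\lambda_i-r$. $\mathcal A=\{1,\bar1,2,\bar2,\dots\}$ consists of positive letters $i$ and negative letters $\bar i$, $|i|=|\bar i|=i$, totally ordered by $<_2$: $0<1<2<3<\cdots<\bar3<\bar2<\bar1$. $I(a,b)=1$ if $a>b$ or $a=b$ is negative, and $I(a,b)=0$ if $a<b$ or $a=b$ is positive. A super filling is $\sigma:\mathrm{dg}(\lambda)\to\mathcal A$; a cell $u=(r,i)$, $r>1$, is a descent if $I(\sigma(u),\sigma((r-1,i)))=1$, and $\mathrm{maj}(\sigma)=\sum_{\text{descents }u}(\mathrm{leg}(u)+1)$. The reading order goes through rows top to bottom, each row right to left. $\Phi_u(\sigma)$ changes the sign ($i\leftrightarrow\bar i$) of the entry in cell $u$. The distinguished label of $\sigma$ is the smallest positive integer $a$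 such that some cell $(r,j)$ has $|\sigma((r,j))|=a$ and $r>a$; if no such $a$ exists, $\sigma$ is $\Phi$-trivial. If $a$ exists, the distinguished cell is the first cell in reading order whose entry has absolute value $a$. *)

(* Defs.v *)
From mathcomp Require Import all_boot.
Set Implicit Arguments. Unset Strict Implicit. Unset Printing Implicit Defensive.

(* Letters of the super alphabet: Pos i = i, Neg i = \bar i (i >= 1 required
   for entries of a filling). *)
Inductive letter := Pos of nat | Neg of nat.

Definition labs (x : letter) : nat := match x with Pos i => i | Neg i => i end.
Definition isneg (x : letter) : bool := match x with Pos _ => false | Neg _ => true end.
Definition flip (x : letter) : letter := match x with Pos i => Neg i | Neg i => Pos i end.

Definition letter_eqb (x y : letter) : bool :=
  (isneg x == isneg y) && (labs x == labs y).

(* the total order <_2 : 1 < 2 < 3 < ... < \bar3 < \bar2 < \bar1 *)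
Definition lt2 (x y : letter) : bool :=
  match x, y with
  | Pos i, Pos j => i < j
  | Pos _, Neg _ => true
  | Neg _, Pos _ => false
  | Neg i, Neg j => j < i
  end.

Definition Iind (x y : letter) : bool := lt2 y x || (letter_eqb x y && isneg x).

Definition is_partition (la : seq nat) : bool := sorted geq la && all (fun p => 0 < p) la.

(* height of column i (1-based) *)
Definition colh (la : seq nat) (i : nat) : nat := nth 0 la i.-1.

(* cell (r,i): row r from the bottom, column i from the left (both 1-based) *)
Definition in_dg (la : seq nat) (r i : nat) : bool :=
  [&& 1 <= i, i <= size la, 1 <= r & r <= colh la i].

Definition filling := nat -> nat -> letter.

Definition is_super_filling (la : seq nat) (s : filling) : Prop :=
  forall r i, in_dg la r i -> 0 < labs (s r i).

Definition leg (la : seq nat) (r i : nat) : nat := colh la i - r.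

Definition descent (s : filling) (r i : nat) : bool := (1 < r) && Iind (s r i) (s r.-1 i).

Definition maj (la : seq nat) (s : filling) : nat :=
  \sum_(1 <= i < (size la).+1) \sum_(2 <= r < (colh la i).+1)
     (if descent s r i then (leg la r i).+1 else 0).

Definition Phi (u : nat * nat) (s : filling) : filling :=
  fun r i => if (r == u.1) && (i == u.2) then flip (s r i) else s r i.

Definition dist_label (la : seq nat) (s : filling) (a : nat) : Prop :=
  0 < a /\
  (exists r j, in_dg la r j /\ labs (s r j) = a /\ a < r) /\
  (forall b, 0 < b < a -> ~ exists r j, [/\ in_dg la r j, labs (s r j) = b & b < r]).

(* (r,j) comes strictly before (r',j') in reading order:
   rows top to bottom, each row right to left *)
Definition reading_before (r' j' r j : nat) : bool := (r < r') || ((r == r') && (j < j')).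

Definition dist_cell (la : seq nat) (s : filling) (a r j : nat) : Prop :=
  in_dg la r j /\ labs (s r j) = a /\
  forall r' j', in_dg la r' j' -> reading_before r' j' r j -> labs (s r' j') <> a.

(* Main.v *)
Require Import Defs.
From mathcomp Require Import all_boot.
From mathcomp Require Import zify.

Lemma sum_ind (m n c v : nat) :
  \sum_(m <= k < n) (if k == c then v else 0) = if (m <= c < n) then v else 0.
Proof.
case: ifP => H.
  rewrite (bigD1_seq c) ?mem_index_iota ?iota_uniq //= eqxx big1 ?addn0 //.
  by move=> k /negPf ->.
rewrite big1_seq // => k /andP[_]; rewrite mem_index_iota.
by case: eqP => // -> ; rewrite H.
Qed.

Definition colsum (la : seq nat) (s : filling) (i : nat) :=
  \sum_(2 <= k < (colh la i).+1) (if descent s k i then (leg la k i).+1 else 0).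

Lemma col_change la (s t : filling) i r :
  2 <= r <= colh la i ->
  (forall k, k != r -> k != r.+1 -> descent t k i = descent s k i) ->
  descent s r i = false -> descent t r i = true ->
  (r < colh la i -> descent s r.+1 i = true /\ descent t r.+1 i = false) ->
  colsum la t i = (colsum la s i).+1.
Proof.
move=> /andP[r2 rh] Hk Hs Ht Hn.
set h := colh la i.
have E : colsum la t i + \sum_(2 <= k < h.+1) (if k == r.+1 then h - r else 0)
       = colsum la s i + \sum_(2 <= k < h.+1) (if k == r then (h - r).+1 else 0).
  rewrite /colsum -!big_split /=.
  apply: eq_big_seq => k; rewrite mem_index_iota => /andP[k2 kh].
  rewrite /leg -/h.
  case: (eqVneq k r) => [->|kr].
    rewrite Hs Ht; have -> : (r == r.+1) = false by apply/eqP; lia.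
    by rewrite addn0 add0n.
  case: (eqVneq k r.+1) => [e|kr1].
    subst k; have [H1 H2] := Hn kh; rewrite H1 H2.
    lia.
  by rewrite Hk.
rewrite !sum_ind in E.
move: E; case: ifP => ?; case: ifP => ?; lia.
Qed.

Lemma maj_change la (s t : filling) i :
  1 <= i <= size la ->
  (forall i', i' != i -> colsum la t i' = colsum la s i') ->
  colsum la t i = (colsum la s i).+1 ->
  maj la t = (maj la s).+1.
Proof.
move=> Hi Ho Hc.
have E : maj la t = maj la s + \sum_(1 <= k < (size la).+1) (if k == i then 1 else 0).
  rewrite /maj -big_split /=; apply: eq_bigr => k _.
  case: (eqVneq k i) => [->|ki]; first by rewrite -/(colsum la t i) Hc addn1.
  by rewrite addn0 -/(colsum la t k) Ho.
by rewrite E sum_ind ltnS Hi addn1.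
Qed.

Lemma Iind_PosL a y : a <= labs y -> Iind (Pos a) y = false.
Proof. case: y => c /= H; rewrite /Iind /letter_eqb /=; lia. Qed.
Lemma Iind_NegL a y : a <= labs y -> Iind (Neg a) y = true.
Proof. case: y => c /= H; rewrite /Iind /letter_eqb /=; lia. Qed.
Lemma Iind_PosR a x : a < labs x -> Iind x (Pos a) = true.
Proof. case: x => c /= H; rewrite /Iind /letter_eqb /=; lia. Qed.
Lemma Iind_NegR a x : a < labs x -> Iind x (Neg a) = false.
Proof. case: x => c /= H; rewrite /Iind /letter_eqb /=; lia. Qed.

Theorem mainTheorem9 (la : seq nat) (s : filling) (a r j i : nat) :
  is_partition la ->
  is_super_filling la s ->
  dist_label la s a ->
  dist_cell la s a r j ->
  in_dg la r i ->
  labs (s r i) = a ->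
  (s r i = Pos a -> maj la (Phi (r, i) s) = (maj la s).+1) /\
  (s r i = Neg a -> (maj la (Phi (r, i) s)).+1 = maj la s).
Proof.
move=> _ Hsf [a0 [[r0 [j0 [Hd0 [Hl0 Har0]]]] Hmin]] [_ [_ Hcell]] Hdg Hlab.
have ar : a < r.
  case: (leqP r0 r) => H; first by lia.
  by case: (Hcell r0 j0 Hd0); rewrite /reading_before ?H.
move: (Hdg); rewrite /in_dg => /and4P[i1 isz r1 rh].
have below : a <= labs (s r.-1 i).
  have Hd : in_dg la r.-1 i by apply/and4P; split; lia.
  case: (leqP a (labs (s r.-1 i))) => // H.
  exfalso; apply: (Hmin (labs (s r.-1 i))).
    by rewrite H andbT; apply: Hsf.
  by exists r.-1, i; split => //; lia.
have above : r < colh la i -> a < labs (s r.+1 i).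
  move=> rlt.
  have Hd : in_dg la r.+1 i by apply/and4P; split; lia.
  have ne : labs (s r.+1 i) <> a by apply: Hcell => //; rewrite /reading_before; lia.
  case: (leqP a (labs (s r.+1 i))) => H; first by lia.
  exfalso; apply: (Hmin (labs (s r.+1 i))).
    by rewrite H andbT; apply: Hsf.
  by exists r.+1, i; split => //; lia.
have Hoth : forall i', i' != i -> colsum la (Phi (r, i) s) i' = colsum la s i'.
  move=> i' ne; rewrite /colsum; apply: eq_bigr => k _.
  by rewrite /descent /Phi /= (negPf ne) !andbF.
have Hk : forall k, k != r -> k != r.+1 ->
    descent (Phi (r, i) s) k i = descent s k i.
  move=> k k1 k2; rewrite /descent /Phi /= (negPf k1) /=.
  have -> : (k.-1 == r) = false by apply/eqP; lia.
  by [].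
have PhiR : Phi (r, i) s r i = flip (s r i) by rewrite /Phi /= !eqxx.
have PhiB : Phi (r, i) s r.-1 i = s r.-1 i.
  by rewrite /Phi /=; have -> : (r.-1 == r) = false by apply/eqP; lia.
have PhiA : Phi (r, i) s r.+1 i = s r.+1 i.
  by rewrite /Phi /=; have -> : (r.+1 == r) = false by apply/eqP; lia.
have r2 : 2 <= r <= colh la i by apply/andP; split; lia.
split => Hsr.
- apply: (@maj_change la s _ i); first by apply/andP; split.
    exact: Hoth.
  apply: (@col_change la _ _ i r) => //.
  + by rewrite /descent Hsr Iind_PosL // andbF.
  + by rewrite /descent PhiR PhiB Hsr Iind_NegL // andbT; lia.
  + move=> rlt; rewrite /descent /= PhiR Hsr PhiA.
    by have Ha := above rlt; rewrite Iind_PosR // Iind_NegR // andbT andbF; split => //; lia.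
- have Hoth' : forall i', i' != i -> colsum la s i' = colsum la (Phi (r, i) s) i'.
    by move=> i' ne; rewrite Hoth.
  rewrite (@maj_change la (Phi (r, i) s) s i) //.
    by apply/andP; split.
  apply: (@col_change la _ _ i r) => //.
  + by move=> k k1 k2; rewrite Hk.
  + by rewrite /descent PhiR PhiB Hsr Iind_PosL // andbF.
  + by rewrite /descent Hsr Iind_NegL // andbT; lia.
  + move=> rlt; rewrite /descent /= PhiR Hsr PhiA.
    by have Ha := above rlt; rewrite Iind_PosR // Iind_NegR // andbT andbF; split => //; lia.
Qed.
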